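(* If $\lambda_1<a$ and $1<q<p$, then for any fixed $\Lambda>0$ there exists $t_0'=t_0'(\Lambda)>0$ such that $I^-_{\lambda,s}(-t\varphi_1)<0$ for all $t\ge t_0'$ and all $0<\lambda<\Lambda$.
   Context: $\Omega\subset\mathbb{R}^N$ bounded smooth domain, $s\in(0,1)$, $p>1$, $N>sp$. $X_p^s=\{u\in W^{s,p}(\mathbb{R}^N): u=0 \text{ a.e. in } \mathbb{R}^N\setminus\Omega\}$ with norm $\|u\|_{X_p^s}=\big(\int_{\mathbb{R}^{2N}}\frac{|u(x)-u(y)|^p}{|x-y|^{N+sp}}dxdy\big)^{1/p}$. $\lambda_1=\inf\{\|u\|_{X_p^s}^p:\|u\|_{L^p(\Omega)}=1\}$ is the first eigenvalue of the fractional $p$-Laplacian on $X_p^s$ and $\varphi_1$ its positive $L^p$-normalized eigenfunction. $u^-=\min\{u,0\}$ and $I^-_{\lambda,s}(u)=\frac1p\|u\|_{X_p^s}^p+\frac\lambda q\int_\Omega|u^-|^q-\frac ap\int_\Omega|u^-|^p$. *)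

(* Defs.v *)
From mathcomp Require Import all_boot all_order all_algebra.
From mathcomp Require Import all_classical all_reals all_analysis.
Import Order.TTheory GRing.Theory Num.Theory.
Import numFieldNormedType.Exports.
Local Open Scope classical_set_scope.
Local Open Scope ring_scope.

Section FracDefs.
Context {R : realType}.

Definition ocbox {n : nat} (a b : n.-tuple R) : set (n.-tuple R) :=
  [set x | forall i : 'I_n, tnth a i < tnth x i <= tnth b i].

Definition boxvol {n : nat} (a b : n.-tuple R) : R :=
  \prod_(i < n) Num.max 0 (tnth b i - tnth a i).

(* n-dimensional Lebesgue (outer) measure: infimum of the total volume of
   countable covers by boxes.  On measurable sets it is Lebesgue measure. *)
Definition lebN {n : nat} (A : set (n.-tuple R)) : \bar R :=
  ereal_inf [set (\sum_(k <oo) (boxvol (ab k).1 (ab k).2)%:E)%E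
            | ab in [set ab : nat -> n.-tuple R * n.-tuple R |
                      A `<=` \bigcup_k ocbox (ab k).1 (ab k).2]].

Definition fstN {n : nat} (z : (n + n).-tuple R) : n.-tuple R :=
  [tuple tnth z (lshift n i) | i < n].
Definition sndN {n : nat} (z : (n + n).-tuple R) : n.-tuple R :=
  [tuple tnth z (rshift n i) | i < n].

Definition distN {n : nat} (x y : n.-tuple R) : R :=
  Num.sqrt (\sum_(i < n) (tnth x i - tnth y i) ^+ 2).

Definition tup2row {n : nat} (x : n.-tuple R) : 'rV[R]_n := \row_i tnth x i.

Fixpoint Ck {n : nat} (k : nat) (f : 'rV[R]_n -> R) : Prop :=
  match k with
  | 0 => continuous f
  | k'.+1 => continuous f /\ (forall x v : 'rV[R]_n, derivable f x v) /\
             (forall v : 'rV[R]_n, Ck k' (fun x => 'D_v f x))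
  end.

Definition smooth_fun {n : nat} (f : 'rV[R]_n -> R) : Prop := forall k, Ck k f.

(* Omega is a bounded domain (nonempty, open, connected) with C^infty boundary,
   expressed through a smooth defining function rho:
   Omega = {rho < 0}, grad rho <> 0 on {rho = 0} (= boundary of Omega). *)
Definition smooth_bounded_domain {n : nat} (Om : set (n.-tuple R)) : Prop :=
  [/\ exists rho : 'rV[R]_n -> R,
        [/\ smooth_fun rho,
            (forall x, Om x <-> rho (tup2row x) < 0) &
            (forall y, rho y = 0 -> exists v, 'D_v rho y != 0)],
      exists M : R, forall x, Om x -> `|tup2row x| <= M,
      connected (tup2row @` Om) &
      Om !=set0].

Definition gagliardo {n : nat} (s p : R) (u : n.-tuple R -> R) : \bar R :=
  (\int[@lebN (n + n)]_(z in setT)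
     ((`|u (fstN z) - u (sndN z)| `^ p) /
        (distN (fstN z) (sndN z) `^ (n%:R + s * p)))%:E)%E.

Definition in_Xps {n : nat} (s p : R) (Om : set (n.-tuple R))
    (u : n.-tuple R -> R) : Prop :=
  [/\ measurable_fun setT u,
      (\int[@lebN n]_(x in setT) (`|u x| `^ p)%:E < +oo)%E,
      (gagliardo s p u < +oo)%E &
      @lebN n [set x | ~ Om x /\ u x != 0] = 0%E].

Definition Xnorm {n : nat} (s p : R) (u : n.-tuple R -> R) : R :=
  fine (gagliardo s p u) `^ p^-1.

Definition LpOmega {n : nat} (p : R) (Om : set (n.-tuple R))
    (u : n.-tuple R -> R) : R :=
  fine (\int[@lebN n]_(x in Om) (`|u x| `^ p)%:E)%E `^ p^-1.

Definition lambda1 {n : nat} (s p : R) (Om : set (n.-tuple R)) : R :=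
  inf [set Xnorm s p u `^ p |
       u in [set u | in_Xps s p Om u /\ LpOmega p Om u = 1]].

Definition is_eigenfunction {n : nat} (s p : R) (Om : set (n.-tuple R))
    (lam : R) (u : n.-tuple R -> R) : Prop :=
  in_Xps s p Om u /\
  forall v, in_Xps s p Om v ->
    (\int[@lebN (n + n)]_(z in setT)
       ((`|u (fstN z) - u (sndN z)| `^ (p - 2) * (u (fstN z) - u (sndN z))
          * (v (fstN z) - v (sndN z))) /
          (distN (fstN z) (sndN z) `^ (n%:R + s * p)))%:E
     = lam%:E * \int[@lebN n]_(x in Om) (`|u x| `^ (p - 2) * u x * v x)%:E)%E.

Definition Iminus {n : nat} (s p q a lam : R) (Om : set (n.-tuple R))
    (u : n.-tuple R -> R) : \bar R :=
  ((p^-1 * Xnorm s p u `^ p)%:E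
   + (lam / q)%:E * \int[@lebN n]_(x in Om) (`|Num.min (u x) 0| `^ q)%:E
   - (a / p)%:E * \int[@lebN n]_(x in Om) (`|Num.min (u x) 0| `^ p)%:E)%E.

End FracDefs.

(* Main.v *)
Require Import Defs.
From HB Require Import structures.
From mathcomp Require Import all_boot all_order all_algebra.
From mathcomp Require Import all_classical all_reals all_analysis.
From mathcomp Require Import ring lra measurable_realfun.
Import Order.TTheory GRing.Theory Num.Theory.
Import numFieldNormedType.Exports.
Local Open Scope classical_set_scope.
Local Open Scope ring_scope.

Section cover_outer.
Local Open Scope ereal_scope.
Context {R : realType} (T C : Type) (S : C -> set T) (w : C -> \bar R).
Hypothesis w0 : forall c, 0 <= w c.

Definition cout (X : set T) : \bar R :=
  ereal_inf [set \sum_(k <oo) w (c k) | c in [set c : nat -> C |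
     X `<=` \bigcup_k S (c k)]].

Lemma cout_ge0 X : 0 <= cout X.
Proof.
apply: le_ereal_inf_tmp => x [c _ <-]; exact: nneseries_ge0.
Qed.

Lemma le_cout : {homo cout : A B / A `<=` B >-> A <= B}.
Proof.
move=> A B AB; apply: ereal_inf_le_tmp => x [c Bc <-]; exists c => //.
exact: subset_trans AB Bc.
Qed.

Lemma cout_sigma_subadditive : sigma_subadditive cout.
Proof.
move=> A; have [[i ioo]|] := pselect (exists i, cout (A i) = +oo).
  rewrite (eseries_pinfty _ _ ioo) ?leey// => n _.
  by rewrite -ltNye (lt_le_trans _ (cout_ge0 _)).
rewrite -forallNE => Aoo.
suff add2e (e : {posnum R}) :
    cout (\bigcup_n A n) <= \sum_(i <oo) cout (A i) + e%:num%:E.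
  by apply/lee_addgt0Pr => _/posnumP[].
rewrite (le_trans _ (epsilon_trick _ _ _))//; last first.
  by move=> n; exact: cout_ge0.
pose P n (B : nat -> C) := A n `<=` \bigcup_k S (B k) /\
  \sum_(k <oo) w (B k) <= cout (A n) + (e%:num / (2 ^ n.+1)%:R)%:E.
have [G PG] : {G : (nat -> C)^nat & forall n, P n (G n)}.
  apply: (@choice _ _ P) => n; rewrite /P /cout.
  set Sx := (X in ereal_inf X); move infS : (ereal_inf Sx) => iS.
  case: iS infS => [r Sr|Soo|Soo].
  - have en1 : (0 < e%:num / (2 ^ n.+1)%:R)%R by [].
    have /(lb_ereal_inf_adherent en1) : ereal_inf Sx \is a fin_num by rewrite Sr.
    move=> [x [B AnB muBx] xS].
    by exists B; split => //; rewrite muBx -Sr; exact/ltW.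
  - by have := Aoo n; rewrite /cout Soo.
  - suff : lbound Sx 0 by move/le_ereal_inf_tmp; rewrite Soo.
    by move=> /= _ [B AnB <-]; exact: nneseries_ge0.
have muG_ge0 x : 0 <= (w \o uncurry G) x by exact: w0.
apply: (@le_trans _ _ (\esum_(i in setT) (w \o uncurry G) i)).
  rewrite /cout; apply: ereal_inf_lbound => /=.
  have /card_esym/ppcard_eqP[f] := card_nat2.
  exists (uncurry G \o f).
    apply: (@subset_trans _  (\bigcup_n \bigcup_k S (G n k))) => [t [i _]|].
      by move=> /(PG i).1 -[j _ ?]; exists i => //; exists j.
    move=> t [i _ [j _ Bijt]]; exists (f^-1%FUN (i, j)) => //=.
    by rewrite invK ?inE.
  rewrite -(esum_pred_image (w \o uncurry G) _ xpredT) ?[fun=> _]set_true//.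
  by rewrite image_eq.
rewrite (_ : esum _ _ = \sum_(i <oo) \sum_(j <oo ) w (G i j)); last first.
  pose J : nat -> set (nat * nat) := fun i => [set (i, j) | j in setT].
  rewrite (_ : setT = \bigcup_k J k); last first.
    by rewrite predeqE => -[a b]; split => // _; exists a => //; exists b.
  rewrite esum_bigcupT /=; last 2 first.
    - apply/trivIsetP => i j _ _ ij.
      rewrite predeqE => -[n m] /=; split => //= -[] [_] _ [<-{n} _].
      by move=> [m' _] [] /esym/eqP; rewrite (negbTE ij).
    - by move=> /= [n m]; exact: w0.
  rewrite -(image_id [set: nat]) -fun_true esum_pred_image//; last first.
    by move=> n _; exact: esum_ge0.
  apply: eq_eseriesr => /= j _.
  rewrite -(esum_pred_image (w \o uncurry G) (pair j) predT)//=; last first.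
    by move=> ? ? _ _; exact: (@can_inj _ _ _ snd).
  by congr esum; rewrite predeqE => -[a b]; split; move=> [i _ <-]; exists i.
apply: lee_lim.
- apply: is_cvg_nneseries => n *.
  by apply: nneseries_ge0 => m *; exact: (muG_ge0 (n, m)).
- by apply: is_cvg_nneseries => n *; apply: adde_ge0 => //; exact: cout_ge0.
- by near=> n; apply: lee_sum => i _; exact: (PG i).2.
Unshelve. all: by end_near. Qed.

End cover_outer.
Arguments cout {R T C}.

Section leb.
Context {R : realType} (n : nat).
Local Notation tup := (n.-tuple R).

Lemma boxvol_ge0 (a b : tup) : 0 <= boxvol a b.
Proof. by apply: prodr_ge0 => i _; rewrite le_max lexx. Qed.

Lemma lebN_cout (X : set tup) : lebN X =
  cout (fun ab : (tup * tup)%type => ocbox ab.1 ab.2) (fun ab => (boxvol ab.1 ab.2)%:E) X.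
Proof. by []. Qed.

Lemma lebN_ge0 X : (0 <= @lebN R n X)%E.
Proof. by rewrite lebN_cout; apply: cout_ge0 => c; rewrite lee_fin boxvol_ge0. Qed.

Lemma le_lebN : {homo @lebN R n : A B / A `<=` B >-> (A <= B)%E}.
Proof. by move=> A B AB; rewrite !lebN_cout; apply: le_cout. Qed.

Lemma lebN_sub : sigma_subadditive (@lebN R n).
Proof.
move=> F; rewrite lebN_cout.
under eq_eseriesr do rewrite lebN_cout.
by apply: cout_sigma_subadditive => c; rewrite lee_fin boxvol_ge0.
Qed.

Hypothesis hn : (0 < n)%N.

Lemma boxvol0 (a : tup) : boxvol a a = 0.
Proof. by rewrite /boxvol (bigD1 (Ordinal hn)) //= subrr maxxx mul0r. Qed.

Lemma lebN_box (a b : tup) : (@lebN R n (ocbox a b) <= (boxvol a b)%:E)%E.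
Proof.
apply: ereal_inf_lbound.
exists (fun k => if k is 0%N then (a, b) else (a, a)).
  by move=> x Hx; exists 0%N.
rewrite nneseries_recl//; last by case=> [|k] _; rewrite lee_fin boxvol_ge0.
rewrite eseries0 ?adde0// => -[|k]// _ _.
by rewrite /= boxvol0.
Qed.

Lemma lebN0 : @lebN R n set0 = 0%E.
Proof.
apply/eqP; rewrite eq_le lebN_ge0 andbT.
have := lebN_box (nseq_tuple n 0) (nseq_tuple n 0); rewrite boxvol0.
by apply: le_trans; apply: le_lebN; exact: sub0set.
Qed.


Lemma max0_split (a b c : R) : Num.max 0 (b - a) =
  Num.max 0 (Num.min b c - a) + Num.max 0 (b - Num.max a c).
Proof.
case: (leP a c) => ?; case: (leP b c) => ?;
case: (leP 0 (b - a)) => ?; case: (leP 0 (b - c)) => ?; case: (leP 0 (c - a)) => ?;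
 try lra.
Qed.

Definition upd_hi (b : tup) (i : 'I_n) (c : R) : tup :=
  [tuple if j == i then Num.min (tnth b j) c else tnth b j | j < n].
Definition upd_lo (a : tup) (i : 'I_n) (c : R) : tup :=
  [tuple if j == i then Num.max (tnth a j) c else tnth a j | j < n].

Lemma boxvol_split a b i c :
  boxvol a b = boxvol a (upd_hi b i c) + boxvol (upd_lo a i c) b.
Proof.
rewrite /boxvol (bigD1 i)//= [X in _ = X + _](bigD1 i)//= [X in _ = _ + X](bigD1 i)//=.
rewrite !tnth_mktuple eqxx.
have -> : \prod_(j < n | j != i) Num.max 0 (tnth (upd_hi b i c) j - tnth a j) =
   \prod_(j < n | j != i) Num.max 0 (tnth b j - tnth a j).
  by apply: eq_bigr => j /negbTE ji; rewrite tnth_mktuple ji.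
have -> : \prod_(j < n | j != i) Num.max 0 (tnth b j - tnth (upd_lo a i c) j) =
   \prod_(j < n | j != i) Num.max 0 (tnth b j - tnth a j).
  by apply: eq_bigr => j /negbTE ji; rewrite tnth_mktuple ji.
by rewrite -mulrDl -max0_split.
Qed.

Definition hs (i : 'I_n) (c : R) : set tup := [set x | tnth x i <= c].

Lemma halfspace_split (i : 'I_n) (c : R) (X : set tup) :
  (lebN (X `&` hs i c) + lebN (X `&` ~` hs i c)
   <= lebN X)%E.
Proof.
apply: le_ereal_inf_tmp => _ [ab Xab <-].
pose ab1 k := ((ab k).1, upd_hi (ab k).2 i c).
pose ab2 k := (upd_lo (ab k).1 i c, (ab k).2).
have h1 : (lebN (X `&` hs i c) <=
    \sum_(k <oo) (boxvol (ab1 k).1 (ab1 k).2)%:E)%E.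
  apply: ereal_inf_lbound; exists ab1 => // x [Xx Hx].
  have [k _ hk] := Xab x Xx; exists k => // j /=; rewrite tnth_mktuple.
  case: eqP => [->|_]; last exact: hk.
  by have /andP[-> h] := hk i; rewrite le_min h; exact: Hx.
have h2 : (lebN (X `&` ~` hs i c) <=
    \sum_(k <oo) (boxvol (ab2 k).1 (ab2 k).2)%:E)%E.
  apply: ereal_inf_lbound; exists ab2 => // x [Xx Hx].
  have [k _ hk] := Xab x Xx; exists k => // j /=; rewrite tnth_mktuple.
  case: eqP => [->|_]; last exact: hk.
  have /andP[h3 ->] := hk i; rewrite gt_max h3 /= andbT.
  by rewrite ltNge; apply/negP => /= h; apply: Hx.
apply: le_trans (leeD h1 h2) _.
rewrite -nneseriesD; last 2 first.
  by move=> k _ _; rewrite lee_fin boxvol_ge0.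
  by move=> k _ _; rewrite lee_fin boxvol_ge0.
rewrite le_eqVlt; apply/orP; left; apply/eqP.
by apply: eq_eseriesr => k _; rewrite /= -EFinD -boxvol_split.
Qed.

End leb.

Section lebmeas.
Context {R : realType} (n : nat) (hn : (0 < n)%N).
Local Notation tup := (n.-tuple R).

Definition lebO : {outer_measure set tup -> \bar R} :=
  HB.pack (@lebN R n) (isOuterMeasure.Build R tup (@lebN R n) (@lebN0 R n hn)
     (@lebN_ge0 R n) (@le_lebN R n) (@lebN_sub R n)).

Lemma hs_cara i c : caratheodory_measurable lebO (@hs R n i c).
Proof. by apply: le_caratheodory_measurable => X; exact: halfspace_split. Qed.

Lemma coord_cara i (B : set R) : measurable B ->
  caratheodory_measurable lebO ((fun x : tup => tnth x i) @^-1` B).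
Proof.
move=> mB.
pose G := fun B : set R => caratheodory_measurable lebO ((fun x : tup => tnth x i) @^-1` B).
suff : <<s (@ocitv R) >> `<=` G by apply.
apply: smallest_sub.
- split.
  + by rewrite /G; cbv beta; rewrite preimage_set0; exact: caratheodory_measurable_set0.
  + move=> A GA; rewrite /G; cbv beta; rewrite setTD preimage_setC; exact: caratheodory_measurable_setC.
  + move=> F GF; rewrite /G; cbv beta; rewrite preimage_bigcup; exact: caratheodory_measurable_bigcup.
- move=> A /ocitvP [->|[[a b] /= ab ->]].
  + rewrite /G; cbv beta; rewrite preimage_set0; exact: caratheodory_measurable_set0.
  + rewrite /G; cbv beta.
    have -> : (fun x : tup => tnth x i) @^-1` `]a, b] = @hs R n i b `&` ~` @hs R n i a.
      apply/seteqP; split => x /=; rewrite /hs /= in_itv /=.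
        by move=> /andP[h1 h2]; split => //; apply/negP; rewrite -ltNge.
      by move=> [h2 /negP h1]; rewrite h2 andbT ltNge.
    by apply: caratheodory_measurable_setI; [|apply: caratheodory_measurable_setC];
      exact: hs_cara.
Qed.

Lemma meas_cara (A : set tup) : measurable A -> caratheodory_measurable lebO A.
Proof.
move: A; apply: smallest_sub.
- split.
  + exact: caratheodory_measurable_set0.
  + by move=> A GA; rewrite setTD; exact: caratheodory_measurable_setC.
  + by move=> F GF; exact: caratheodory_measurable_bigcup.
- move=> X hX.
  have [i [B mB <-]] : exists i : 'I_n, preimage_set_system setT
      ((fun (i : 'I_n) (x : tup) => tnth x i) i) measurable X.
    move: hX; elim/big_ind: _ => //.
      by move=> A B hA hB [/hA|/hB].
    by move=> i _ h; exists i.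
  rewrite setTI.
  exact: coord_cara.
Qed.

Lemma lebN_sigma : semi_sigma_additive (@lebN R n).
Proof.
move=> F mF tF mU.
have := @caratheodory_measure_sigma_additive R tup lebO F.
apply.
- by move=> k; exact: meas_cara.
- exact: tF.
- exact: meas_cara.
Qed.

Definition lebM : {measure set tup -> \bar R} :=
  HB.pack (@lebN R n) (isMeasure.Build _ tup R (@lebN R n) (@lebN0 R n hn)
     (@lebN_ge0 R n) lebN_sigma).

Lemma lebME : (lebM : set tup -> \bar R) = @lebN R n.
Proof. by []. Qed.

End lebmeas.

Section gen.
Import HBNNSimple.
Local Open Scope ereal_scope.
Context d (T : measurableType d) (R : realType) (mu : {measure set T -> \bar R}).

Lemma intle (f g : T -> \bar R) : (forall x, 0 <= f x) -> (forall x, f x <= g x) ->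
  \int[mu]_x f x <= \int[mu]_x g x.
Proof.
move=> f0 fg.
have g0 : forall x, 0 <= g x by move=> x; exact: le_trans (f0 x) (fg x).
rewrite !ge0_integralTE //=; apply: ereal_sup_le => _ [h hf <-]; exists h => //.
by move=> x; exact: le_trans (hf x) (fg x).
Qed.

Let intZ_le (k : R) (f : T -> \bar R) : (0 < k)%R -> (forall x, 0 <= f x) ->
  \int[mu]_x (k%:E * f x) <= k%:E * \int[mu]_x f x.
Proof.
move=> k0 f0.
have kf0 : forall x, 0 <= k%:E * f x by move=> x; rewrite mule_ge0 // lee_fin ltW.
rewrite !ge0_integralTE //=; apply: ge_ereal_sup => _ [h hle <-].
have ki0 : (0 <= k^-1)%R by rewrite invr_ge0 ltW.
pose h' := scale_nnsfun h ki0.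
have -> : sintegral mu (h : T -> R) = k%:E * sintegral mu (h' : T -> R).
  rewrite -sintegralrM; apply: eq_sintegral => x /=.
  by rewrite mulrA mulfV ?mul1r // gt_eqF.
apply: lee_wpmul2l; first by rewrite lee_fin ltW.
apply: ereal_sup_ubound; exists h' => // x /=.
have := lee_wpmul2l (ki0 : 0 <= k^-1%:E) (hle x).
by rewrite muleA -!EFinM (mulVf (lt0r_neq0 k0)) mul1e.
Qed.

Lemma intZT (k : R) (f : T -> \bar R) : (0 < k)%R -> (forall x, 0 <= f x) ->
  \int[mu]_x (k%:E * f x) = k%:E * \int[mu]_x f x.
Proof.
move=> k0 f0; apply/eqP; rewrite eq_le; apply/andP; split.
  exact: intZ_le.
have kf0 : forall x, 0 <= k%:E * f x by move=> x; rewrite mule_ge0 // lee_fin ltW.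
have ki : (0 < k^-1)%R by rewrite invr_gt0.
have h1 := @intZ_le _ _ ki kf0.
have h2 : \int[mu]_x ((k^-1)%:E * (k%:E * f x)) = \int[mu]_x f x.
  apply: eq_integral => x _.
  by rewrite muleA -(EFinM k^-1 k) (mulVf (lt0r_neq0 k0)) mul1e.
rewrite h2 in h1.
have k0E : 0 <= k%:E by rewrite lee_fin ltW.
have := lee_wpmul2l k0E h1.
by rewrite (muleA k%:E) -(EFinM k k^-1) (mulfV (lt0r_neq0 k0)) mul1e.
Qed.

Lemma intZ (D : set T) (k : R) (f : T -> \bar R) : (0 < k)%R ->
  (forall x, D x -> 0 <= f x) ->
  \int[mu]_(x in D) (k%:E * f x) = k%:E * \int[mu]_(x in D) f x.
Proof.
move=> k0 f0; rewrite (integral_mkcond D) (integral_mkcond D f).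
rewrite (_ : (fun x => k%:E * f x) \_ D = fun x => k%:E * (f \_ D) x); last first.
  by apply/funext => x; rewrite /patch; case: ifP => //; rewrite mule0.
apply: intZT => // x; rewrite /patch; case: ifP => // /set_mem; exact: f0.
Qed.

End gen.

Lemma pw {R : realType} (p d : R) : p != 0 -> `|d| `^ (p - 2) * d * d = `|d| `^ p.
Proof.
move=> p0; have [->|d0] := eqVneq d 0; first by rewrite mulr0 normr0 powR0.
have nd : `|d| != 0 by rewrite normr_eq0.
rewrite -mulrA -expr2 -real_normK ?num_real // -powR_mulrn ?normr_ge0 //.
by rewrite -powRD ?nd ?implybT // subrK.
Qed.

Lemma LpJ {R : realType} (p : R) (J : \bar R) : 0 < p -> (0 <= J)%E ->
  fine J `^ p^-1 = 1 -> J = 1%E.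
Proof.
move=> p0 J0; case: J J0 => [r| |] //= r0.
- move=> h; congr EFin.
  have := congr1 (fun x => x `^ p) h; rewrite -powRrM mulVf ?gt_eqF //.
  by rewrite powRr1 // powR1.
- by rewrite powR0 ?invr_eq0 ?gt_eqF // => /eqP; rewrite eq_sym oner_eq0.
Qed.

Lemma powq_le {R : realType} (x p q : R) : 0 <= x -> 0 <= q -> q <= p ->
  x `^ q <= 1 + x `^ p.
Proof.
move=> x0 q0 qp; have [x1|x1] := leP x 1.
  apply: (@le_trans _ _ 1); last by rewrite lerDl powR_ge0.
  have := @ge0_ler_powR R q q0 x 1; rewrite !nnegrE x0 ler01 /= powR1.
  by apply.
apply: (@le_trans _ _ (x `^ p)); last by rewrite lerDr.
by apply: ler_powR => //; exact: ltW.
Qed.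

Theorem lemma4p8 (R : realType) (N : nat) (s p q a : R)
    (Om : set (N.-tuple R)) (phi1 : N.-tuple R -> R) :
  0 < s -> s < 1 -> 1 < p -> s * p < N%:R ->
  smooth_bounded_domain Om ->
  is_eigenfunction s p Om (lambda1 s p Om) phi1 ->
  (forall x, Om x -> 0 < phi1 x) ->
  LpOmega p Om phi1 = 1 ->
  lambda1 s p Om < a -> 1 < q -> q < p ->
  forall Lam : R, 0 < Lam ->
  exists t0 : R, 0 < t0 /\
    forall t lam : R, t0 <= t -> 0 < lam -> lam < Lam ->
      (Iminus s p q a lam Om (fun x => (- (t * phi1 x))%R) < 0%E)%E.
Proof.
move=> s0 s1 p1 spN Hdom [Xphi eig] phipos Lp1 la q1 qp Lam Lam0.
have p0 : 0 < p by apply: lt_trans p1.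
have q0 : 0 < q by apply: lt_trans q1.
have N0 : (0 < N)%N.
  have : (0 : R) < N%:R by apply: lt_trans spN; rewrite mulr_gt0.
  by rewrite ltr0n.
have NN0 : (0 < N + N)%N by rewrite addn_gt0 N0.
have J0 : (0 <= \int[lebM N N0]_(x in Om) (`|phi1 x| `^ p)%:E)%E.
  by apply: integral_ge0 => x _; rewrite lee_fin powR_ge0.
have J1 : (\int[lebM N N0]_(x in Om) (`|phi1 x| `^ p)%:E = 1)%E.
  by apply: (@LpJ _ _ _ p0 J0); rewrite -Lp1 /LpOmega -(lebME N N0).
have G1 : (\int[lebM (N + N) NN0]_(z in setT) ((`|phi1 (fstN z) - phi1 (sndN z)| `^ p) /
        (distN (fstN z) (sndN z) `^ (N%:R + s * p)))%:E = (lambda1 s p Om)%:E)%E.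
  have E := eig phi1 Xphi; rewrite -(lebME N N0) -(lebME (N + N) NN0) in E.
  have E2 : (\int[lebM N N0]_(x in Om) (`|phi1 x| `^ (p - 2) * phi1 x * phi1 x)%:E = 1)%E.
    by rewrite -J1; apply: eq_integral => x _; rewrite pw // gt_eqF.
  rewrite E2 mule1 in E; rewrite -E; apply: eq_integral => z _.
  by rewrite pw // gt_eqF.
have la0 : 0 <= lambda1 s p Om.
  by rewrite -lee_fin -G1; apply: integral_ge0 => z _; rewrite lee_fin divr_ge0 // powR_ge0.
have [mphi Ip _ _] := Xphi.
rewrite -(lebME N N0) in Ip.
have [M HM] : exists M : R, forall x, Om x -> `|tup2row x| <= M by case: Hdom.
pose lo : N.-tuple R := [tuple -(M+1) | _ < N].
pose hi : N.-tuple R := [tuple M+1 | _ < N].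
pose Box := \bigcap_(i in [set: 'I_N])
   ((fun x : N.-tuple R => tnth x i) @^-1` `]-(M+1), M+1]).
have mBox : measurable Box.
  apply: fin_bigcap_measurable; first exact: finite_finset.
  move=> i _; rewrite -[X in measurable X]setTI.
  exact: (measurable_tnth i measurableT (measurable_itv _)).
have OmB : Om `<=` Box.
  move=> x Omx i _ /=; rewrite in_itv /=.
  have h1 : `|tnth x i| <= M.
    apply: le_trans (HM x Omx).
    change (`|tnth x i| <= mx_norm (tup2row x)).
    rewrite mx_normrE; apply: le_trans (le_bigmax _ _ (ord0, i)).
    by rewrite /tup2row mxE.
  move: h1; rewrite ler_norml => /andP[h2 h3]; apply/andP; split; lra.
have BoxS : Box `<=` ocbox lo hi.
  move=> x Bx i; rewrite !tnth_mktuple; have := Bx i Logic.I.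
  by rewrite /= in_itv /=.
have lBox : (lebN Box < +oo)%E.
  apply: le_lt_trans (@le_lebN R N _ _ BoxS) _.
  by apply: le_lt_trans (@lebN_box R N N0 lo hi) _; exact: ltry.
have mphip := measurableT_comp (@measurable_powR R p)
   (measurableT_comp (@normr_measurable R setT) mphi).
move/measurable_EFinP : mphip => mphip.
have mind := @measurable_indic _ (tuple_tuple_of__canonical__measurable_structure_SigmaRing N) R setT Box mBox.
move/measurable_EFinP : mind => mind.
have Abound : (\int[lebM N N0]_(x in Om) (`|phi1 x| `^ q)%:E <=
    lebN Box + \int[lebM N N0]_x (`|phi1 x| `^ p)%:E)%E.
  rewrite integral_mkcond.
  have H1 : forall x, (0 <= ((fun x => (`|phi1 x| `^ q)%:E) \_ Om) x)%E.
    by move=> x; rewrite /patch; case: ifP => _ //; rewrite lee_fin powR_ge0.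
  have H2 : forall x, (((fun x => (`|phi1 x| `^ q)%:E) \_ Om) x <=
       ((\1_Box x)%:E + (`|phi1 x| `^ p)%:E)%E)%E.
    move=> x; rewrite /patch; case: ifP => [/set_mem Omx|_]; last first.
      by rewrite adde_ge0 // lee_fin ?powR_ge0 // indicE; case: (_ \in _).
    rewrite indicE (mem_set (OmB x Omx)).
    change ((`|phi1 x| `^ q)%:E <= (1 + `|phi1 x| `^ p)%:E)%E; rewrite lee_fin.
    by apply: powq_le; [exact: normr_ge0|exact: ltW|exact: ltW].
  apply: le_trans (@intle _ _ _ (lebM N N0) _ _ H1 H2) _.
  rewrite ge0_integralD //; try by move=> x _; rewrite lee_fin ?powR_ge0 // indicE; case: (_ \in _).
  by rewrite integral_indic // setIT.
have Afin : (\int[lebM N N0]_(x in Om) (`|phi1 x| `^ q)%:E \is a fin_num)%E.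
  rewrite ge0_fin_numE; last by apply: integral_ge0 => x _; rewrite lee_fin powR_ge0.
  by apply: le_lt_trans Abound _; rewrite lte_add_pinfty.
set L1 := lambda1 s p Om.
set A0 := fine (\int[lebM N N0]_(x in Om) (`|phi1 x| `^ q)%:E).
have A0E : (\int[lebM N N0]_(x in Om) (`|phi1 x| `^ q)%:E = A0%:E)%E by rewrite fineK.
have A00 : 0 <= A0.
  by rewrite /A0 fine_ge0 // integral_ge0 // => x _; rewrite lee_fin powR_ge0.
have aL : 0 < a - L1 by rewrite subr_gt0.
have pq0 : 0 < p - q by rewrite subr_gt0.
pose K := (Lam * A0 / q + 1) * p / (a - L1).
have K1 : 0 < Lam * A0 / q + 1.
  by have := divr_ge0 (mulr_ge0 (ltW Lam0) A00) (ltW q0); lra.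
have K0 : 0 < K by rewrite /K divr_gt0 // mulr_gt0.
exists (Num.max 1 (K `^ (p - q)^-1)).
split; first by rewrite lt_max ltr01.
move=> t lam tt0 lam0 lamL.
have t1 : 1 <= t by apply: le_trans tt0; rewrite le_max lexx.
have t0 : 0 < t by apply: lt_le_trans ltr01 t1.
have tK : K <= t `^ (p - q).
  have h : K `^ (p - q)^-1 <= t by apply: le_trans tt0; rewrite le_max lexx orbT.
  have := @ge0_ler_powR R (p - q) (ltW pq0) (K `^ (p - q)^-1) t.
  rewrite !nnegrE powR_ge0 (ltW t0) -powRrM mulVf ?gt_eqF // powRr1 ?(ltW K0) //.
  by apply.
rewrite /Iminus /Xnorm /gagliardo -(lebME N N0) -(lebME (N + N) NN0).
have tp0 : 0 < t `^ p by rewrite powR_gt0.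
have tq0 : 0 < t `^ q by rewrite powR_gt0.
have Gt : (\int[lebM (N + N) NN0]_z
      ((`|- (t * phi1 (fstN z)) - - (t * phi1 (sndN z))| `^ p /
       distN (fstN z) (sndN z) `^ (N%:R + s * p))%:E) = (t `^ p * L1)%:E)%E.
  rewrite EFinM -G1 -intZT //; last first.
    by move=> z; rewrite lee_fin divr_ge0 // powR_ge0.
  apply: eq_integral => z _; rewrite -EFinM; congr EFin.
  rewrite mulrA -powRM ?normr_ge0 ?(ltW t0) //; congr (_ `^ _ / _).
  by rewrite opprK addrC -mulrBr normrM gtr0_norm // distrC.
have Mt : forall r, 0 < r -> (\int[lebM N N0]_(x in Om)
     (`|Num.min (- (t * phi1 x)) 0| `^ r)%:E =
     (t `^ r)%:E * \int[lebM N N0]_(x in Om) (`|phi1 x| `^ r)%:E)%E.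
  move=> r r0; rewrite -intZ //; try (by rewrite powR_gt0);
    try (by move=> x _; rewrite lee_fin powR_ge0).
  apply: eq_integral => x /set_mem Omx; rewrite -EFinM; congr EFin.
  have hmin : Num.min (- (t * phi1 x)) 0 = - (t * phi1 x).
    by apply/min_idPl; rewrite oppr_le0 mulr_ge0 // ltW // phipos.
  by rewrite hmin normrN normrM gtr0_norm // powRM // ltW.
rewrite Gt (Mt q q0) (Mt p p0) A0E J1 /=.
rewrite -powRrM mulVf ?gt_eqF // powRr1; last by rewrite mulr_ge0 // ltW.
rewrite -!EFinM -!EFinD lte_fin.
have tpE : t `^ p = t `^ q * t `^ (p - q).
  by rewrite -powRD ?gt_eqF ?implybT // addrC subrK.
rewrite tpE; set u := t `^ (p - q).
have claim : lam * A0 / q < u * (a - L1) / p.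
  have h1 : lam * A0 / q <= Lam * A0 / q.
    by rewrite ler_wpM2r ?invr_ge0 ?(ltW q0) // ler_wpM2r // ltW.
  have h2 : Lam * A0 / q + 1 = K * (a - L1) / p.
    by rewrite /K; field; rewrite !gt_eqF.
  have h3 : K * (a - L1) / p <= u * (a - L1) / p.
    by rewrite ler_wpM2r ?invr_ge0 ?(ltW p0) // ler_wpM2r // ltW.
  lra.
have E : p^-1 * (t `^ q * u * L1) + lam / q * (t `^ q * A0) +
    - (a / p * (t `^ q * u * 1)) = - (t `^ q * (u * (a - L1) / p - lam * A0 / q)).
  by ring.
by rewrite E oppr_lt0 mulr_gt0 // subr_gt0.
Qed.
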